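(* The Petersen graph has, for no vertex $v$, two (nor three) level-disjoint partitions rooted in $v$ of optimal height, where optimal height for $k$ partitions in this non-bipartite graph means maximal height equal to $\mathrm{ecc}(v)+k-1=k+1$.
   Context: For $S\subseteq V(G)$, $N(S)$ is the set of vertices adjacent to some vertex of $S$. A level partition of $G$ is a tuple $\mathcal{S}=(S_0,\dots,S_h)$ of pairwise disjoint sets with union $V(G)$ such that $S_i\subseteq N(S_{i-1})$ for $1\le i\le h$; $h$ is its height; it is rooted in $v$ if $S_0=\{v\}$. Level partitions are level-disjoint if for every two of them $\mathcal{S},\mathcal{T}$, $S_i\cap T_i=\emptyset$ for every $1\le i\le\min$ of their heights. The Petersen graph is 3-regular, vertex-transitive, non-bipartite, of girth 5, with every vertex of eccentricity 2. *)

(* Defs.v *)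
From mathcomp Require Import all_boot.
Set Implicit Arguments. Unset Strict Implicit. Unset Printing Implicit Defensive.

(* The Petersen graph as the Kneser graph K(5,2): vertices are the 2-element
   subsets of {0,..,4}, adjacent iff disjoint. *)
Definition petersen_vertex := {A : {set 'I_5} | #|A| == 2}.

Definition petersen_adj : rel petersen_vertex :=
  fun x y => [disjoint val x & val y].

Definition nbhd (T : finType) (e : rel T) (S : {set T}) : {set T} :=
  [set x | [exists y in S, e y x]].

Definition height (T : finType) (S : seq {set T}) : nat := (size S).-1.

Definition level_partition (T : finType) (e : rel T) (S : seq {set T}) : Prop :=
  [/\ 0 < size S,
      (forall i j, i < j -> j < size S -> [disjoint nth set0 S i & nth set0 S j]),
      \bigcup_(A <- S) A = [set: T] &
      (forall i, 0 < i -> i < size S -> nth set0 S i \subset nbhd e (nth set0 S i.-1))].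

Definition rooted_in (T : finType) (S : seq {set T}) (v : T) : Prop :=
  nth set0 S 0 = [set v].

Definition level_disjoint (T : finType) (Ss : seq (seq {set T})) : Prop :=
  forall a b, a < b -> b < size Ss ->
    forall i, 1 <= i -> i <= minn (height (nth [::] Ss a)) (height (nth [::] Ss b)) ->
      [disjoint nth set0 (nth [::] Ss a) i & nth set0 (nth [::] Ss b) i].

(* Main.v *)
Require Import Defs.
From mathcomp Require Import all_boot zify.

Lemma sub_compl (v a : {set 'I_5}) : [disjoint v & a] -> a \subset ~: v.
Proof. by rewrite disjoint_sym disjoint_subset => H; apply/subsetP => x /(subsetP H); rewrite !inE. Qed.

Lemma cardC5 (v : {set 'I_5}) : #|v| = 2 -> #|~: v| = 3.
Proof. move=> H; have := cardsC v; rewrite card_ord H; lia. Qed.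

Lemma key2 {v a y : {set 'I_5}} : #|v| = 2 -> #|a| = 2 -> #|y| = 2 ->
  [disjoint v & a] -> [disjoint v & y] -> ~~ [disjoint a & y].
Proof.
move=> hv ha hy /sub_compl da /sub_compl dy; apply/negP => day.
have : a :|: y \subset ~: v by rewrite subUset da dy.
move/subset_leq_card; rewrite cardC5 // cardsU (disjoint_setI0 day) cards0 ha hy.
by [].
Qed.

Lemma key3 {v a y w : {set 'I_5}} : #|v| = 2 -> #|a| = 2 -> #|y| = 2 -> #|w| = 2 ->
  [disjoint v & a] -> [disjoint v & y] -> a != y -> [disjoint a & w] -> [disjoint w & y] -> w = v.
Proof.
move=> hv ha hy hw /sub_compl da /sub_compl dy ney daw dwy.
have sU : a :|: y \subset ~: v by rewrite subUset da dy.
have cI : #|a :&: y| <= 1.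
  have : a :&: y \proper a.
    rewrite properEneq subsetIl andbT; apply: contra ney => /eqP E.
    have sa : a \subset y by rewrite -E subsetIr.
    by rewrite eqEcard sa ha hy.
  by move/proper_card; rewrite ha.
have EU : a :|: y = ~: v.
  apply/eqP; rewrite eqEcard sU cardC5 // cardsU ha hy; lia.
have sw : w \subset v.
  rewrite -[v]setCK -EU setCU subsetI sub_compl // sub_compl // disjoint_sym //.
by apply/eqP; rewrite eqEcard sw hv hw.
Qed.

Notation PV := petersen_vertex.

Lemma card2 (x : PV) : #|val x| = 2.
Proof. exact: (eqP (valP x)). Qed.

Lemma disjF {T : finType} {A B : {set T}} {x} : [disjoint A & B] -> x \in A -> x \in B -> False.
Proof.
rewrite -setI_eq0 => /eqP E xA xB.
have : x \in A :&: B by rewrite inE xA xB.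
by rewrite E inE.
Qed.

Lemma F1 (x : PV) : ~~ petersen_adj x x.
Proof.
rewrite /petersen_adj; apply/negP => D.
have : 0 < #|val x| by rewrite card2.
by rewrite card_gt0 => /set0Pn [e he]; exact: (disjF D he he).
Qed.

Lemma F4 (v : PV) : exists y, petersen_adj v y.
Proof.
have h3 := @cardC5 (val v) (card2 v).
have : 0 < #|~: val v| by rewrite h3.
rewrite card_gt0 => /set0Pn [e he].
have h2 : #|~: val v :\ e| = 2 by have := cardsD1 e (~: val v); rewrite he h3; lia.
have : 0 < #|~: val v :\ e| by rewrite h2.
rewrite card_gt0 => /set0Pn [f hf].
have ef : e != f by move: hf; rewrite !inE eq_sym => /andP[].
have cB : #|[set e; f]| == 2 by rewrite cards2 ef.
exists (exist _ [set e; f] cB).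
rewrite /petersen_adj /= disjoint_sym disjoint_subset; apply/subsetP => x.
rewrite !inE => /orP[] /eqP ->.
  by move: he; rewrite inE.
by move: hf; rewrite !inE => /andP[_].
Qed.

Lemma adjsym (x y : PV) : petersen_adj x y = petersen_adj y x.
Proof. by rewrite /petersen_adj disjoint_sym. Qed.

Lemma nth_lt (S : seq {set PV}) i x : x \in nth set0 S i -> i < size S.
Proof. by case: ltnP => // h; rewrite nth_default // inE. Qed.
Arguments nth_lt {S i x}.

Lemma cover (S : seq {set PV}) x : level_partition petersen_adj S ->
  exists2 i, i < size S & x \in nth set0 S i.
Proof.
case=> _ _ U _.
have : x \in \bigcup_(A <- S) A by rewrite U inE.
elim: S {U} => [|A S IH]; first by rewrite big_nil inE.
rewrite big_cons inE => /orP[h|/IH [i hi hx]]; first by exists 0.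
by exists i.+1.
Qed.

Lemma uniq_level {S : seq {set PV}} {i j x} : level_partition petersen_adj S ->
  x \in nth set0 S i -> x \in nth set0 S j -> i = j.
Proof.
case=> _ D _ _ hi hj.
have li := nth_lt hi; have lj := nth_lt hj.
case: (ltngtP i j) => // h.
  by case: (disjF (D _ _ h lj) hi hj).
by case: (disjF (D _ _ h li) hj hi).
Qed.

Lemma step {S : seq {set PV}} {i x} : level_partition petersen_adj S -> 0 < i ->
  x \in nth set0 S i -> exists2 z, z \in nth set0 S i.-1 & petersen_adj z x.
Proof.
case=> _ _ _ N hi hx.
have := subsetP (N i hi (nth_lt hx)) x hx.
by rewrite inE => /existsP [z /andP [hz hzx]]; exists z.
Qed.

Lemma L1 {S : seq {set PV}} {v y i} : level_partition petersen_adj S -> rooted_in S v ->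
  petersen_adj v y -> y \in nth set0 S i -> y \notin nth set0 S 1 -> 4 <= i.
Proof.
move=> lp r avy hy hn1.
have Hroot : forall z, z \in nth set0 S 1 -> petersen_adj v z.
  move=> z hz; have [z' hz' a] := step lp (isT : 0 < 1) hz.
  by move: hz'; rewrite /= r inE => /eqP <-.
case: i hy => [|[|[|[|i]]]] hy //.
- move: hy; rewrite r inE => /eqP E; subst y.
  by move: (F1 v); rewrite avy.
- by rewrite hy in hn1.
- have [z hz azy] := step lp (isT : 0 < 2) hy.
  have avz := Hroot z hz.
  by move: (key2 (card2 v) (card2 z) (card2 y) avz avy); rewrite /petersen_adj in azy; rewrite azy.
- have [w hw awy] := step lp (isT : 0 < 3) hy.
  have [z hz azw] := step lp (isT : 0 < 2) hw.
  have avz := Hroot z hz.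
  have nzy : val z != val y.
    apply: contra hn1 => /eqP E; have -> : y = z by apply: val_inj.
    exact: hz.
  have E := key3 (card2 v) (card2 z) (card2 y) (card2 w) avz avy nzy azw awy.
  have E' : w = v by apply: val_inj.
  have hv : v \in nth set0 S 0 by rewrite r inE.
  by rewrite E' in hw; have := uniq_level lp hv hw.
Qed.

Lemma down {S : seq {set PV}} : level_partition petersen_adj S ->
  forall i x, 0 < i -> x \in nth set0 S i -> exists z, z \in nth set0 S 1.
Proof.
move=> lp; elim=> [|i IH] x // _ hx.
case: i IH hx => [|i] IH hx; first by exists x.
have [z hz _] := step lp (isT : 0 < i.+2) hx.
exact: IH z isT hz.
Qed.

Lemma S1ne {S : seq {set PV}} {v} : level_partition petersen_adj S -> rooted_in S v ->
  exists z, z \in nth set0 S 1.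
Proof.
move=> lp r; have [y avy] := F4 v.
have [i _ hy] := cover S y lp.
case: (boolP (y \in nth set0 S 1)) => h; first by exists y.
have := L1 lp r avy hy h => h4.
exact: down lp i y (leq_trans (isT : 0 < 4) h4) hy.
Qed.

Lemma G {Ss : seq (seq {set PV})} {v a b y} :
  (forall S, S \in Ss -> level_partition petersen_adj S /\ rooted_in S v) ->
  level_disjoint Ss -> a != b -> a < size Ss -> b < size Ss ->
  y \in nth set0 (nth [::] Ss b) 1 ->
  exists2 i, 4 <= i & y \in nth set0 (nth [::] Ss a) i.
Proof.
move=> H ld nab la lb hy.
have [lpA rA] := H _ (mem_nth [::] la).
have [lpB rB] := H _ (mem_nth [::] lb).
have avy : petersen_adj v y.
  have [z hz azy] := step lpB (isT : 0 < 1) hy.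
  by move: hz; rewrite /= rB inE => /eqP <-.
have [i li hi] := cover _ y lpA.
exists i => //.
apply: (L1 lpA rA avy hi); apply/negP => h1.
have s1 := nth_lt h1; have s2 := nth_lt hy.
have hm : 1 <= minn (height (nth [::] Ss a)) (height (nth [::] Ss b)).
  by rewrite /height leq_min !ltn_predRL; apply/andP; split.
case: (ltngtP a b) nab => // hab _.
  by case: (disjF (ld _ _ hab lb 1 isT hm) h1 hy).
by rewrite minnC in hm; case: (disjF (ld _ _ hab la 1 isT hm) hy h1).
Qed.

Theorem mainTheorem8 :
  forall (v : petersen_vertex) (k : nat), (k = 2 \/ k = 3) ->
  forall Ss : seq (seq {set petersen_vertex}),
    size Ss = k ->
    (forall S, S \in Ss -> level_partition petersen_adj S /\ rooted_in S v) ->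
    level_disjoint Ss ->
    \max_(S <- Ss) height S <> k.+1.
Proof.
move=> v k hk Ss hs H ld hmax.
have hh : forall a, a < size Ss -> height (nth [::] Ss a) <= k.+1.
  move=> a la; rewrite -hmax; apply: (leq_bigmax_seq (P := xpredT)) => //.
  exact: mem_nth.
have l1 : 1 < size Ss by rewrite hs; case: hk => ->.
have l0 : 0 < size Ss by apply: ltnW.
case: hk => Ek; rewrite Ek in hs hh.
- have [lpB rB] := H _ (mem_nth [::] l1).
  have [y hy] := S1ne lpB rB.
  have [i i4 hi] := G H ld (isT : 0 != 1) l0 l1 hy.
  have := nth_lt hi; have := hh 0 l0; rewrite /height; lia.
- have l2 : 2 < size Ss by rewrite hs.
  have [lpC rC] := H _ (mem_nth [::] l2).
  have [y hy] := S1ne lpC rC.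
  have [i i4 hi] := G H ld (isT : 0 != 2) l0 l2 hy.
  have [j j4 hj] := G H ld (isT : 1 != 2) l1 l2 hy.
  have si := nth_lt hi; have sj := nth_lt hj.
  have h0 := hh 0 l0; have h1 := hh 1 l1.
  have Ei : i = 4 by move: h0; rewrite /height; lia.
  have Ej : j = 4 by move: h1; rewrite /height; lia.
  subst i j.
  have hm : 4 <= minn (height (nth [::] Ss 0)) (height (nth [::] Ss 1)).
    by rewrite /height leq_min !ltn_predRL; apply/andP; split.
  by case: (disjF (ld 0 1 isT l1 4 isT hm) hi hj).
Qed.
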